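(* Let $G$ be a discrete group, $\mathbf k\subseteq{\rm Seq}(\mathbf C)$ a $\sigma$-subring with constants $\mathbf C$, $\alpha\in\mathcal C_c(G,\mathbf k)$, and $\phi$ the fundamental solution of $\sigma(s)=\alpha\star s$. Then: (a) ${\rm Sol}_c(\alpha,L^c)$ is a monogenous right $G$-module, namely ${\rm Sol}_c(\alpha,L^c)=\bigoplus_{g\in G}\langle\phi\star g\rangle$; (b) ${\rm Sol}(\alpha,L)=\prod_{g\in G}\langle\phi\star g\rangle$; (c) ${\rm Sol}_{\rm per}(\alpha,L^{\rm per})$ is a union of finite dimensional $G$-modules and admits a natural structure of $G^{\rm pro}$-module, where $G^{\rm pro}$ is the profinite completion of $G$.
   Context: ${\rm Seq}(\mathbf C)$: complex sequences indexed by $t\in\mathbf Z_{\ge0}$ with shift $\sigma(x)^{(t)}=x^{(t+1)}$. $\mathcal C_c(G,\mathbf k)$: finitely supported functions $G\to\mathbf k$. The equation $\sigma(s)=\alpha\star s$ means $s_g^{(t+1)}=\sum_{h\in G}\alpha^{(t)}_hs^{(t)}_{h^{-1}g}$ for $s\in\mathcal C(G,{\rm Seq}(\mathbf C))$; its fundamental solution $\phi$ is the solution with $\phi^{(0)}_e=1$, $\phi^{(0)}_g=0$ for $g\neq e$. $G$ acts on the right by $(s\star g)_h=s_{hg^{-1}}$, and solutions are mapped to solutions. ${\rm Sol}(\alpha,L)$ is the $\mathbf C$-space of all solutions; ${\rm Sol}_c(\alpha,L^c)$ the solutions with $s^{(t)}$ of finite support for every $t$; ${\rm Sol}_{\rm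 per}(\alpha,L^{\rm per})$ the solutions that are $H$-periodic ($s_{gh}=s_g$ for $h\in H$) for some normal subgroup $H$ of finite index. $\langle\phi\star g\rangle$ is the complex line spanned by $\phi\star g$; $\prod_{g\in G}\langle\phi\star g\rangle$ denotes the set of sums $\sum_g c_g\,\phi\star g$, $c_g\in\mathbf C$, which are finite when evaluated at any $(g,t)$. *)

(* Defs.v *)
From HB Require Import structures.
From mathcomp Require Import all_boot all_order all_algebra.
From mathcomp Require Import complex.
From mathcomp Require Import boolp classical_sets functions cardinality fsbigop.
From mathcomp Require Import reals.

Set Implicit Arguments.
Unset Strict Implicit.
Unset Printing Implicit Defensive.
Import Order.TTheory GRing.Theory Num.Theory.

Local Open Scope classical_set_scope.
Local Open Scope ring_scope.

Section SeqDefs.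
Variable R : realType.

Definition Seq := nat -> R[i].

Definition shift (x : Seq) : Seq := fun t => x t.+1.

Definition cseq (c : R[i]) : Seq := fun _ => c.

Definition sigma_subring_with_constants (k : set Seq) : Prop :=
  [/\ forall x y, k x -> k y -> k (fun t => x t - y t),
      forall x y, k x -> k y -> k (fun t => x t * y t),
      forall x, k x -> k (shift x),
      forall c, k (cseq c)
    & forall x, k x -> shift x = x -> exists c, x = cseq c].

Variable G : groupType.

Definition in_Cc (k : set Seq) (alpha : G -> Seq) : Prop :=
  (forall h, k (alpha h)) /\ finite_set [set h | alpha h <> cseq 0].

Definition gconv (alpha s : G -> Seq) : G -> Seq :=
  fun g t => \sum_(h \in [set: G]) alpha h t * s (h^-1 * g)%g t.

Definition is_sol (alpha s : G -> Seq) : Prop :=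
  forall g t, s g t.+1 = gconv alpha s g t.

Fixpoint fund_aux (alpha : G -> Seq) (t : nat) : G -> R[i] :=
  match t with
  | 0 => fun g => if g == 1%g then 1 else 0
  | t'.+1 => fun g =>
      \sum_(h \in [set: G]) alpha h t' * fund_aux alpha t' (h^-1 * g)%g
  end.

Definition fundsol (alpha : G -> Seq) : G -> Seq :=
  fun g t => fund_aux alpha t g.

Definition ract (s : G -> Seq) (g : G) : G -> Seq :=
  fun h => s (h * g^-1)%g.

Definition is_sol_c (alpha s : G -> Seq) : Prop :=
  is_sol alpha s /\ forall t, finite_set [set g | s g t <> 0].

Definition fi_normal (H : set G) : Prop :=
  [/\ H 1%g,
      forall x y, H x -> H y -> H (x * y^-1)%g,
      forall x g, H x -> H (g^-1 * x * g)%g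
    & exists reps : seq G, forall g, exists2 r, r \in reps & H (r^-1 * g)%g].

Definition periodic (s : G -> Seq) (H : set G) : Prop :=
  forall g h, H h -> s (g * h)%g = s g.

Definition is_sol_per (alpha s : G -> Seq) : Prop :=
  is_sol alpha s /\ exists H, fi_normal H /\ periodic s H.

Definition lincomb (phi : G -> Seq) (c : G -> R[i]) : G -> Seq :=
  fun g t => \sum_(h \in [set: G]) c h * ract phi h g t.

Definition pointwise_finite (phi : G -> Seq) (c : G -> R[i]) : Prop :=
  forall g t, finite_set [set h | c h * ract phi h g t <> 0].

Definition in_span (B : seq (G -> Seq)) (v : G -> Seq) : Prop :=
  exists a : nat -> R[i],
    v = fun g t => \sum_(i < size B) a i * nth (fun _ _ => 0) B i g t.

(** Profinite completion G^pro = lim_{N} G/N (N normal of finite index):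
    an element is represented by a compatible family of representatives
    xi N in G, i.e. xi N = xi M mod M whenever N <= M. *)
Definition is_pro (xi : set G -> G) : Prop :=
  forall N M, fi_normal N -> fi_normal M -> N `<=` M ->
    M (xi N * (xi M)^-1)%g.

Definition pro_eq (xi eta : set G -> G) : Prop :=
  forall N, fi_normal N -> N (xi N * (eta N)^-1)%g.

Definition pro_mul (xi eta : set G -> G) : set G -> G :=
  fun N => (xi N * eta N)%g.

Definition pro_one : set G -> G := fun _ => 1%g.

Definition pro_of (g : G) : set G -> G := fun _ => g.

End SeqDefs.

(* Main.v *)
Require Import Defs.
From HB Require Import structures.
From mathcomp Require Import all_boot all_order all_algebra.
From mathcomp Require Import complex.
From mathcomp Require Import boolp classical_sets functions cardinality fsbigop.
From mathcomp Require Import reals.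
From mathcomp Require Import finmap.

Import Order.TTheory GRing.Theory Num.Theory.
Local Open Scope classical_set_scope.
Local Open Scope ring_scope.
Lemma sum_nz {R : realType} (T : eqType) (s : seq T) (F : T -> R[i]) :
  \sum_(i <- s) F i <> 0 -> exists2 i, i \in s & F i <> 0.
Proof.
move=> H; case: (pselect (exists2 i, i \in s & F i <> 0)) => // H'.
exfalso; apply: H; rewrite big1_seq // => i si.
case: (eqVneq (F i) 0) => // /eqP Fi; by case: H'; exists i.
Qed.

Lemma mul_nz {R : realType} (a b : R[i]) : a * b <> 0 -> a <> 0 /\ b <> 0.
Proof. by move=> H; split=> e; apply: H; rewrite e ?mul0r ?mulr0. Qed.

Lemma notin_fs {T : choiceType} {W : set T} {h} :
  finite_set W -> h \notin fset_set W -> ~ W h.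
Proof. by move=> fW hn Wh; move/negP: hn; apply; rewrite in_fset_set // mem_set. Qed.

Lemma in_fs {T : choiceType} {W : set T} {h} :
  finite_set W -> h \in fset_set W -> W h.
Proof. by move=> fW; rewrite in_fset_set // => /set_mem. Qed.

Definition Aset {R : realType} {G : groupType} (alpha : G -> Seq R) : {fset G} :=
  fset_set [set h | alpha h <> cseq 0].

Lemma alpha_out {R : realType} {G : groupType} (alpha : G -> Seq R) h t :
  finite_set [set h | alpha h <> cseq 0] -> h \notin Aset alpha -> alpha h t = 0.
Proof. by move=> fA /(notin_fs fA) /contrapT ->. Qed.

Lemma gconvE {R : realType} {G : groupType} (alpha : G -> Seq R) s g t :
  finite_set [set h | alpha h <> cseq 0] ->
  gconv alpha s g t = \sum_(h <- Aset alpha) alpha h t * s (h^-1 * g)%g t.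
Proof.
move=> fA; rewrite /gconv (fsbigTE (Aset alpha)) // => h hn.
by rewrite alpha_out // mul0r.
Qed.

Definition Pset {R : realType} {G : groupType} (alpha : G -> Seq R) t :=
  [set g : G | fund_aux alpha t g <> 0].

Lemma Pfin {R : realType} {G : groupType} (alpha : G -> Seq R) :
  finite_set [set h | alpha h <> cseq 0] -> forall t, finite_set (Pset alpha t).
Proof.
move=> fA; elim=> [|t IH].
  apply: (sub_finite_set (B:=[set 1%g])); last exact: finite_set1.
  by move=> g; rewrite /Pset /=; case: (g =P 1%g).
apply: (sub_finite_set (B := [set (x * y)%g | x in [set h | alpha h <> cseq 0] & y in Pset alpha t])); last exact: finite_image2.
move=> g H.
have H' : gconv alpha (fundsol alpha) g t <> 0 := H.
rewrite gconvE // in H'; case/sum_nz: H' => h hA /mul_nz [h1 h2].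
exists h; first by move=> e; apply: h1; rewrite e.
by exists (h^-1 * g)%g => //; rewrite mulVKg.
Qed.

Lemma lincombE {R : realType} {G : groupType} (phi : G -> Seq R) c g t (X : {fset G}) :
  (forall h, h \notin X -> c h * phi (g * h^-1)%g t = 0) ->
  lincomb phi c g t = \sum_(h <- X) c h * phi (g * h^-1)%g t.
Proof. by move=> HX; rewrite /lincomb /ract (fsbigTE X). Qed.
Lemma sol_uniq {R : realType} {G : groupType} (alpha : G -> Seq R) s1 s2 :
  is_sol alpha s1 -> is_sol alpha s2 -> (forall g, s1 g 0%N = s2 g 0%N) -> s1 = s2.
Proof.
move=> h1 h2 h0.
have E : forall t g, s1 g t = s2 g t.
  elim=> [|t IH] g; first exact: h0.
  rewrite h1 h2 /gconv; apply: eq_fsbigr => h _; by rewrite IH.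
by apply/funext=> g; apply/funext=> t.
Qed.

Lemma lincomb_sol {R : realType} {G : groupType} (alpha : G -> Seq R) c :
  finite_set [set h | alpha h <> cseq 0] ->
  is_sol alpha (lincomb (fundsol alpha) c).
Proof.
move=> fA g t.
pose SA := [set h | alpha h <> cseq 0].
pose W := [set (p.2^-1 * p.1^-1 * g)%g | p in SA `*` Pset alpha t].
have fW : finite_set W by apply: finite_image; apply: finite_setX => //; exact: Pfin.
have inW : forall a h, SA a -> fund_aux alpha t (a^-1 * g * h^-1)%g <> 0 -> W h.
  move=> a h Sa Hp; exists (a, (a^-1 * g * h^-1)%g) => //=.
  by rewrite !invgM !invgK !mulgA mulgK mulgVK.
have inA : forall a, a \in Aset alpha -> SA a by move=> a /(in_fs fA).
rewrite (lincombE (fundsol alpha) c g t.+1 (fset_set W)); last first.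
  move=> h /(notin_fs fW) nW.
  suff -> : fundsol alpha (g * h^-1)%g t.+1 = 0 by rewrite mulr0.
  apply: contrapT => Hn; apply: nW.
  have Hn' : gconv alpha (fundsol alpha) (g * h^-1)%g t <> 0 := Hn.
  rewrite gconvE // in Hn'; case/sum_nz: Hn' => a aA /mul_nz [_ Ha].
  by apply: (inW a); [exact: inA|rewrite -mulgA].
rewrite gconvE //.
transitivity (\sum_(h <- fset_set W) c h * \sum_(a <- Aset alpha)
   alpha a t * fundsol alpha (a^-1 * g * h^-1)%g t).
  apply: eq_bigr => h _; congr (_ * _).
  change (gconv alpha (fundsol alpha) (g * h^-1)%g t = \sum_(a <- Aset alpha) alpha a t * fundsol alpha (a^-1 * g * h^-1)%g t).
  rewrite gconvE //; apply: eq_bigr => a _; by rewrite mulgA.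
rewrite [RHS](eq_big_seq (fun a => alpha a t * \sum_(h <- fset_set W) c h *
     fundsol alpha (a^-1 * g * h^-1)%g t)); last first.
  move=> a aA /=; rewrite (lincombE (fundsol alpha) c (a^-1 * g)%g t (fset_set W)) //.
  move=> h /(notin_fs fW) nW.
  suff -> : fundsol alpha (a^-1 * g * h^-1)%g t = 0 by rewrite mulr0.
  apply: contrapT => Hn; apply: nW; apply: (inW a) => //; exact: inA.
transitivity (\sum_(h <- fset_set W) \sum_(a <- Aset alpha)
   c h * (alpha a t * fundsol alpha (a^-1 * g * h^-1)%g t)).
  by apply: eq_bigr => h _; rewrite big_distrr.
rewrite exchange_big; apply: eq_bigr => a _; rewrite big_distrr.
by apply: eq_bigr => h _; rewrite mulrCA.
Qed.

Lemma lincomb0 {R : realType} {G : groupType} (alpha : G -> Seq R) c g :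
  lincomb (fundsol alpha) c g 0%N = c g.
Proof.
rewrite (lincombE (fundsol alpha) c g 0%N [fset g]%fset) ?big_seq_fset1 /=.
  by rewrite /fundsol /= mulgV eqxx mulr1.
move=> h; rewrite inE => hg; rewrite /fundsol /=.
case: eqP => [/eqP|]; last by rewrite mulr0.
by rewrite divg_eq1 eq_sym (negbTE hg).
Qed.

Lemma pwf {R : realType} {G : groupType} (alpha : G -> Seq R) c :
  finite_set [set h | alpha h <> cseq 0] -> pointwise_finite (fundsol alpha) c.
Proof.
move=> fA g t.
apply: (sub_finite_set (B := [set (p^-1 * g)%g | p in Pset alpha t])); last first.
  by apply: finite_image; exact: Pfin.
move=> h /= /mul_nz [_ H]; exists (g * h^-1)%g => //.
by rewrite invgM invgK mulgVK.
Qed.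

Lemma ract_sol {R : realType} {G : groupType} (alpha : G -> Seq R) s g :
  is_sol alpha s -> is_sol alpha (ract s g).
Proof.
move=> Hs x t; rewrite /ract Hs /gconv; apply: eq_fsbigr => h _.
by rewrite mulgA.
Qed.

Lemma sol_lin {R : realType} {G : groupType} (alpha : G -> Seq R) a b s1 s2 :
  finite_set [set h | alpha h <> cseq 0] ->
  is_sol alpha s1 -> is_sol alpha s2 ->
  is_sol alpha (fun g t => a * s1 g t + b * s2 g t).
Proof.
move=> fA H1 H2 g t; rewrite /= H1 H2 !(gconvE alpha _ _ _ fA).
rewrite !big_distrr -big_split /=; apply: eq_bigr => h _.
by rewrite mulrDr (mulrCA a) (mulrCA b).
Qed.

Lemma sol0 {R : realType} {G : groupType} (alpha : G -> Seq R) :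
  finite_set [set h | alpha h <> cseq 0] ->
  is_sol alpha (fun _ _ => 0).
Proof. by move=> fA g t; rewrite (gconvE alpha _ _ _ fA) big1 // => h _; rewrite mulr0. Qed.
Lemma fiV {G : groupType} {H : set G} {x} : fi_normal H -> H x -> H (x^-1)%g.
Proof. by case=> H1 Hd _ _ Hx; have := Hd _ _ H1 Hx; rewrite mul1g. Qed.

Lemma fiM {G : groupType} {H : set G} {x y} : fi_normal H -> H x -> H y -> H (x * y)%g.
Proof.
move=> fH Hx Hy; case: fH => H1 Hd Hc Hr.
have := Hd _ _ Hx (fiV (And4 H1 Hd Hc Hr) Hy); by rewrite invgK.
Qed.

Lemma ract_kg {R : realType} {G : groupType} {s : G -> Seq R} {H : set G} {a b} :
  fi_normal H -> periodic s H -> H (a * b^-1)%g -> ract s a = ract s b.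
Proof.
move=> fH Ps Hab; apply/funext => x; rewrite /ract.
have -> : (x * a^-1 = (x * b^-1) * (a * b^-1)^-1)%g.
  by rewrite invgM invgK !mulgA mulgVK.
by rewrite Ps //; apply: fiV.
Qed.

Lemma ract_per {R : realType} {G : groupType} (s : G -> Seq R) (H : set G) g :
  fi_normal H -> periodic s H -> periodic (ract s g) H.
Proof.
move=> fH Ps x h Hh; rewrite /ract.
have -> : (x * h * g^-1 = (x * g^-1) * (g^-1^-1 * h * g^-1))%g.
  by rewrite invgK !mulgA mulgVK.
by rewrite Ps //; case: fH => _ _ Hc _; apply: Hc.
Qed.

Lemma ract_ract {R : realType} {G : groupType} (s : G -> Seq R) a b :
  ract (ract s a) b = ract s (a * b)%g.
Proof. by apply/funext => x; rewrite /ract invgM mulgA. Qed.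

Lemma ract1 {R : realType} {G : groupType} (s : G -> Seq R) : ract s 1%g = s.
Proof. by apply/funext => x; rewrite /ract invg1 mulg1. Qed.

Lemma fiI {G : groupType} {H1 H2 : set G} :
  fi_normal H1 -> fi_normal H2 -> fi_normal (H1 `&` H2).
Proof.
move=> f1 f2; have f1' := f1; have f2' := f2.
case: f1 => a1 d1 c1 [r1 R1]; case: f2 => a2 d2 c2 [r2 R2].
split.
- by split.
- by move=> x y [? ?] [? ?]; split; [apply: d1|apply: d2].
- by move=> x g [? ?]; split; [apply: c1|apply: c2].
have ex : forall p : G * G, exists y : G, forall x, H1 (p.1^-1 * x)%g ->
    H2 (p.2^-1 * x)%g -> H1 (p.1^-1 * y)%g /\ H2 (p.2^-1 * y)%g.
  move=> p; case: (pselect (exists x, H1 (p.1^-1 * x)%g /\ H2 (p.2^-1 * x)%g)).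
    by case=> y [h1 h2]; exists y.
  by move=> N; exists 1%g => x h1 h2; exfalso; apply: N; exists x.
have [f Hf] := choice ex.
exists [seq f (x, y) | x <- r1, y <- r2] => g.
case: (R1 g) => x xr hx; case: (R2 g) => y yr hy.
exists (f (x, y)); first exact: (allpairs_f (fun x y => f (x, y))).
case: (Hf (x, y) g hx hy) => /= k1 k2.
have E : forall z, ((f (x, z))^-1 * g = (z^-1 * f (x, z))^-1 * (z^-1 * g))%g.
  by move=> z; rewrite invgM invgK !mulgA mulgK.
have E1 : ((f (x, y))^-1 * g = (x^-1 * f (x, y))^-1 * (x^-1 * g))%g.
  by rewrite invgM invgK !mulgA mulgK.
split; [rewrite E1|rewrite E]; apply: fiM => //; exact: fiV.
Qed.

Definition pact {R : realType} {G : groupType} (xi : set G -> G) (s : G -> Seq R) : G -> Seq R :=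
  match pselect (exists H, fi_normal H /\ periodic s H) with
  | left e => ract s (xi (projT1 (cid e)))
  | right _ => s
  end.

Lemma pact_def {R : realType} {G : groupType} (s : G -> Seq R) :
  (exists H, fi_normal H /\ periodic s H) ->
  exists H0, [/\ fi_normal H0, periodic s H0 & forall xi, pact xi s = ract s (xi H0)].
Proof.
rewrite /pact; case: pselect => // e _.
case: (cid e) => H0 [f0 p0] /=; by exists H0.
Qed.

Lemma pact_spec {R : realType} {G : groupType} {xi : set G -> G} {s : G -> Seq R} {H} :
  is_pro xi -> fi_normal H -> periodic s H -> pact xi s = ract s (xi H).
Proof.
move=> px fH pH.
have [H0 [f0 p0 ->]] := pact_def s (ex_intro _ H (conj fH pH)).
have fN := fiI f0 fH.
rewrite -(ract_kg f0 p0 (px _ _ fN f0 (fun x => @proj1 _ _))).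
apply: (ract_kg fH pH (px _ _ fN fH (fun x => @proj2 _ _))).
Qed.
Lemma in_span_nth {R : realType} {G : groupType} (B : seq (G -> Seq R)) j :
  (j < size B)%N -> in_span B (nth (fun _ _ => 0) B j).
Proof.
move=> hj; exists (fun i => if i == j then 1 else 0).
apply/funext=> g; apply/funext=> t.
rewrite (bigD1 (Ordinal hj)) //= eqxx mul1r big1 ?addr0 // => i ne.
case: eqP => [e|]; last by rewrite mul0r.
by move: ne; rewrite (_ : i = Ordinal hj) ?eqxx //; apply: val_inj.
Qed.

Lemma span_sol {R : realType} {G : groupType} (alpha : G -> Seq R)
    (B : seq (G -> Seq R)) (a : nat -> R[i]) :
  finite_set [set h | alpha h <> cseq 0] ->
  (forall i, (i < size B)%N -> is_sol alpha (nth (fun _ _ => 0) B i)) ->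
  is_sol alpha (fun g t => \sum_(i < size B) a i * nth (fun _ _ => 0) B i g t).
Proof.
move=> fA HB.
suff : forall n, (n <= size B)%N ->
  is_sol alpha (fun g t => \sum_(i < n) a i * nth (fun _ _ => 0) B i g t).
  by apply.
elim=> [|n IH] hn.
  have -> : (fun g t => \sum_(i < 0) a i * nth (fun _ _ => 0) B i g t)
     = (fun _ _ => 0) :> (G -> Seq R).
    by apply/funext=> g; apply/funext=> t; rewrite big_ord0.
  exact: sol0.
have -> : (fun g t => \sum_(i < n.+1) a i * nth (fun _ _ => 0) B i g t)
   = (fun g t => 1 * (\sum_(i < n) a i * nth (fun _ _ => 0) B i g t)
        + a n * nth (fun _ _ => 0) B n g t) :> (G -> Seq R).
  by apply/funext=> g; apply/funext=> t; rewrite big_ord_recr mul1r.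
apply: sol_lin => //; first by apply: IH; apply: ltnW.
exact: HB.
Qed.

Lemma span_per {R : realType} {G : groupType} (B : seq (G -> Seq R)) (a : nat -> R[i]) H :
  (forall i, (i < size B)%N -> periodic (nth (fun _ _ => 0) B i) H) ->
  periodic (fun g t => \sum_(i < size B) a i * nth (fun _ _ => 0) B i g t) H.
Proof.
move=> P g h Hh; apply/funext=> t /=; apply: eq_bigr => i _.
by rewrite (P i (ltn_ord i) g h Hh).
Qed.

Lemma sol_per_iff {R : realType} {G : groupType} (alpha : G -> Seq R) s :
  finite_set [set h | alpha h <> cseq 0] ->
  is_sol_per alpha s <->
     exists B : seq (G -> Seq R),
       [/\ in_span B s,
           (forall v, in_span B v -> is_sol_per alpha v)
         & (forall (i : 'I_(size B)) g,
              in_span B (ract (nth (fun _ _ => 0) B i) g))].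
Proof.
move=> fA; split; last by case=> B [Hs Hv _]; exact: Hv.
case=> Hs [H [fH pH]].
have fH' := fH; case: fH' => H1 Hd Hc [reps Hr].
pose B := s :: [seq ract s r | r <- reps].
have nthB : forall i, (i < size B)%N -> exists a, nth (fun _ _ => 0) B i = ract s a.
  case=> [|i] hi; first by exists 1%g; rewrite ract1.
  exists (nth 1%g reps i); rewrite /= (nth_map 1%g) //.
  by move: hi; rewrite /= ltnS size_map.
have inR : forall a, in_span B (ract s a).
  move=> a; case: (Hr a) => r rr hr.
  have har : H (a * r^-1)%g.
    by have := Hc _ (r^-1)%g hr; rewrite invgK mulVKg.
  rewrite (ract_kg fH pH har).
  have -> : ract s r = nth (fun _ _ => 0) B (index r reps).+1.
    by rewrite /= (nth_map 1%g) ?index_mem // nth_index.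
  by apply: in_span_nth; rewrite /= ltnS size_map index_mem.
exists B; split.
- exact: (in_span_nth B 0).
- move=> v [a ->]; split.
    apply: span_sol => // i hi; have [b ->] := nthB i hi; exact: ract_sol.
  exists H; split => //; apply: span_per => i hi.
  have [b ->] := nthB i hi; exact: ract_per.
- move=> i g; have [b ->] := nthB i (ltn_ord i); rewrite ract_ract; exact: inR.
Qed.

Theorem proposition1p12 (R : realType) (G : groupType)
    (k : set (Seq R)) (alpha : G -> Seq R) :
  sigma_subring_with_constants k ->
  in_Cc k alpha ->
  let phi := fundsol alpha in
  (* (a) Sol_c is the right G-module generated by phi, and
         Sol_c = (+)_{g in G} <phi * g> (direct sum) *)
  [/\ is_sol_c alpha phi,
      (forall s g, is_sol_c alpha s -> is_sol_c alpha (ract s g)),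
      (forall s, is_sol_c alpha s <->
         exists c : G -> R[i],
           finite_set [set g | c g <> 0] /\ s = lincomb phi c)
    & (forall c : G -> R[i], finite_set [set g | c g <> 0] ->
         lincomb phi c = (fun _ _ => 0) -> c = (fun _ => 0))] /\
  (* (b) Sol = prod_{g in G} <phi * g> *)
  (forall s, is_sol alpha s <->
     exists c : G -> R[i], pointwise_finite phi c /\ s = lincomb phi c) /\
  (* (c) Sol_per is a union of finite dimensional G-modules ... *)
  (forall s, is_sol_per alpha s <->
     exists B : seq (G -> Seq R),
       [/\ in_span B s,
           (forall v, in_span B v -> is_sol_per alpha v)
         & (forall (i : 'I_(size B)) g,
              in_span B (ract (nth (fun _ _ => 0) B i) g))]) /\
  (* ... and carries a natural structure of G^pro-module *)
  (exists act : (set G -> G) -> (G -> Seq R) -> (G -> Seq R),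
     [/\ (forall xi s, is_pro xi -> is_sol_per alpha s ->
            is_sol_per alpha (act xi s)),
         (forall xi s H, is_pro xi -> is_sol_per alpha s ->
            fi_normal H -> periodic s H -> act xi s = ract s (xi H)),
         (forall xi eta s, is_pro xi -> is_pro eta -> pro_eq xi eta ->
            is_sol_per alpha s -> act xi s = act eta s),
         [/\ (forall g s, is_sol_per alpha s -> act (pro_of g) s = ract s g),
             (forall s, is_sol_per alpha s -> act (@pro_one G) s = s) &
         (forall xi eta s, is_pro xi -> is_pro eta -> is_sol_per alpha s ->
            act (pro_mul xi eta) s = act eta (act xi s))]
       & (forall xi (a : R[i]) s1 s2, is_pro xi ->
            is_sol_per alpha s1 -> is_sol_per alpha s2 ->
            act xi (fun g t => a * s1 g t + s2 g t) =
            (fun g t => a * act xi s1 g t + act xi s2 g t))]).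
Proof.
move=> _ [kA fA] phi; rewrite {}/phi.
split; [split|split; [|split]].
- split; first by move=> g t.
  move=> t; exact: (Pfin alpha fA t).
- move=> s g [Hs Hf]; split; first exact: ract_sol.
  move=> t; apply: (sub_finite_set (B := (fun x => x * g)%g @` [set x | s x t <> 0])).
    by move=> h /= H; exists (h * g^-1)%g => //; rewrite mulgVK.
  exact: finite_image.
- move=> s; split.
    case=> Hs Hf; exists (fun g => s g 0%N); split; first exact: Hf.
    apply: sol_uniq => //; first exact: lincomb_sol.
    by move=> g; rewrite lincomb0.
  case=> c [fc ->]; split; first exact: lincomb_sol.
  move=> t.
  apply: (sub_finite_set (B := [set (x * y)%g | x in Pset alpha t & y in [set g | c g <> 0]])); last first.
    by apply: finite_image2 => //; exact: Pfin.
  move=> g /= H.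
  rewrite (lincombE (fundsol alpha) c g t (fset_set [set g | c g <> 0])) in H; last first.
    by move=> h /(notin_fs fc) /contrapT ->; rewrite mul0r.
  case/sum_nz: H => h /(in_fs fc) ch /mul_nz [_ Hp].
  exists (g * h^-1)%g => //; exists h => //; by rewrite mulgVK.
- move=> c _ E; apply/funext => g; by rewrite -(lincomb0 alpha c g) E.
- move=> s; split; last by case=> c [_ ->]; exact: lincomb_sol.
  move=> Hs; exists (fun g => s g 0%N); split; first exact: pwf.
  apply: sol_uniq => //; first exact: lincomb_sol.
  by move=> g; rewrite lincomb0.
- move=> s; exact: sol_per_iff.
exists pact; split.
- move=> xi s px [Hs [H [fH pH]]]; rewrite (pact_spec px fH pH); split.
    exact: ract_sol.
  by exists H; split => //; exact: ract_per.
- by move=> xi s H px _ fH pH; exact: pact_spec.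
- move=> xi eta s px pe peq [Hs [H [fH pH]]].
  rewrite (pact_spec px fH pH) (pact_spec pe fH pH).
  exact: (ract_kg fH pH (peq H fH)).
- split.
  + by move=> g s [_ Hex]; have [H0 [_ _ ->]] := pact_def s Hex.
  + by move=> s [_ Hex]; have [H0 [_ _ ->]] := pact_def s Hex; exact: ract1.
  + move=> xi eta s px pe [Hs Hex]; have [H0 [f0 p0 E]] := pact_def s Hex.
    rewrite E E (pact_spec pe f0 (ract_per _ _ _ f0 p0)).
    by rewrite ract_ract.
- move=> xi a s1 s2 px [S1 [H1 [f1 p1]]] [S2 [H2 [f2 p2]]].
  have fN := fiI f1 f2.
  have q1 : periodic s1 (H1 `&` H2) by move=> g h [h1 _]; exact: p1.
  have q2 : periodic s2 (H1 `&` H2) by move=> g h [_ h2]; exact: p2.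
  have qc : periodic (fun g t => a * s1 g t + s2 g t) (H1 `&` H2).
    by move=> g h hN /=; rewrite (q1 g h hN) (q2 g h hN).
  by rewrite (pact_spec px fN qc) (pact_spec px fN q1) (pact_spec px fN q2).
Qed.
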